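(* Let $f$ be a Stokes vector field and $K$ a Mueller transform field, with rotation forms $\mathbf f$ and $\mathbf K$ respectively. Then the rotation form $\mathbf g$ of the Stokes vector field $K_{\mathcal F}[f]$ is given, for all $R_o\in SO(3)$, by $$\mathbf g(R_o)=\frac{1}{2\pi}\int_{SO(3)}\mathbf K(R_i,R_o)\,\mathbf f(R_i)\,dR_i.$$
   Context: Fix a right-handed orthonormal global frame $F_g=[\hat x_g,\hat y_g,\hat z_g]$ of $\mathbb R^3$; $S^2$ is the unit sphere with solid-angle measure $d\hat\omega$. A local frame at $\hat\omega$ is a right-handed orthonormal frame $F$ whose third axis is $\hat\omega$. A rotation $R$ acts on frames by $RF$ (rotating each axis). Stokes space. $\mathcal S_{\hat\omega}$ consists of classes $[\mathbf s]_F$ ($\mathbf s\in\mathbb R^4$, $F$ a local frame at $\hat\omega$) with $(\mathbf s,F)\sim(C(\vartheta)\mathbf s,F')$, where $F'$ is $F$ rotated by $\vartheta$ about $\hat\omega$. Here $C(\vartheta)$ is the identity on coordinates 0, 3 and acts on coordinates $(1,2)$ by $\begin{pmatrix}\cos2\vartheta&\sin2\vartheta\\-\sin2\vartheta&\cos2\vartheta\end{pmatrix}$. $[s]^F$ denotes the component vector of $s$ with respect to $F$. A Stokes vector field $f$ assigns $f(\hat\omega)\in\mathcal S_{\hat\omega}$ to each $\hat\omega$. Mueller transform fields. A Mueller transform field $K$ assigns to each $(\hat\omega_i,\hat\omega_o)$ a real linear map $K(\hat\omega_i,\hat\omega_o):\mathcal S_{\hat\omega_i}\to\mathcal S_{\hat\omega_o}$.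 Its Mueller matrix $[N]^{F_i\to F_o}$ is defined by $[Ns]^{F_o}=[N]^{F_i\to F_o}[s]^{F_i}$. The induced operator is $K_{\mathcal F}[f](\hat\omega_o)=\int_{S^2}K(\hat\omega_i,\hat\omega_o)f(\hat\omega_i)d\hat\omega_i$. Rotation forms. The rotation form of a Stokes vector field $f$ is $\mathbf f:SO(3)\to\mathbb R^4$, $\mathbf f(R)=[f(R\hat z_g)]^{RF_g}$. The rotation form of $K$ is $\mathbf K:SO(3)\times SO(3)\to\mathbb R^{4\times4}$, $\mathbf K(R_i,R_o)=[K(R_i\hat z_g,R_o\hat z_g)]^{R_iF_g\to R_oF_g}$. Measure on $SO(3)$. $\int_{SO(3)}h(R)\,dR=\int_0^{2\pi}\int_0^\pi\int_0^{2\pi}h(R_{\hat z_g}(\alpha)R_{\hat y_g}(\beta)R_{\hat z_g}(\gamma))\sin\beta\,d\alpha\,d\beta\,d\gamma$, where $R_{\hat u}(t)$ is rotation by angle $t$ about the axis $\hat u$. *)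

(* Defs.v *)
From HB Require Import structures.
From mathcomp Require Import all_boot all_order all_algebra.
From mathcomp Require Import all_classical all_reals all_analysis.
Set Implicit Arguments. Unset Strict Implicit. Unset Printing Implicit Defensive.
Import Order.TTheory GRing.Theory Num.Theory.
Import numFieldNormedType.Exports.
Local Open Scope classical_set_scope.
Local Open Scope ring_scope.

Section Defs.
Variable R : realType.

(* Vectors of R^3 are column vectors in coordinates w.r.t. the global frame
   F_g; a frame [x;y;z] is the 3x3 matrix whose columns are its axes.
   Hence F_g is the identity matrix and R F = R *m F. *)
Definition vec3 := 'cV[R]_3.
Definition frame := 'M[R]_3.
Definition coord (u : vec3) (k : nat) : R := u (inord k) 0.

Definition Fg : frame := 1%:M.
Definition ex : vec3 := \col_(i < 3) (if (i : nat) == 0%N then 1 else 0).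
Definition ey : vec3 := \col_(i < 3) (if (i : nat) == 1%N then 1 else 0).
Definition ez : vec3 := \col_(i < 3) (if (i : nat) == 2%N then 1 else 0).

Definition on_sphere (w : vec3) : bool := \sum_(i < 3) (w i 0) ^+ 2 == 1.

Definition is_frame (F : frame) : bool := (F^T *m F == 1%:M) && (\det F == 1).
Definition is_rot (Q : 'M[R]_3) : bool := (Q^T *m Q == 1%:M) && (\det Q == 1).
Definition axis3 (F : frame) : vec3 := col (inord 2) F.
Definition local_frame (w : vec3) (F : frame) : bool :=
  is_frame F && (axis3 F == w).

(* rotation by angle t about the (unit) axis u : Rodrigues' formula *)
Definition crossmx (u : vec3) : 'M[R]_3 :=
  \matrix_(i < 3, j < 3)
    match (i : nat), (j : nat) with
    | 0, 1 => - coord u 2 | 0, 2 => coord u 1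
    | 1, 0 => coord u 2   | 1, 2 => - coord u 0
    | 2, 0 => - coord u 1 | 2, 1 => coord u 0
    | _, _ => 0 end.
Definition rotmx (u : vec3) (t : R) : 'M[R]_3 :=
  cos t *: 1%:M + sin t *: crossmx u + (1 - cos t) *: (u *m u^T).

Definition Cmx (t : R) : 'M[R]_4 :=
  \matrix_(i < 4, j < 4)
    match (i : nat), (j : nat) with
    | 0, 0 => 1 | 3, 3 => 1
    | 1, 1 => cos (2 * t) | 1, 2 => sin (2 * t)
    | 2, 1 => - sin (2 * t) | 2, 2 => cos (2 * t)
    | _, _ => 0 end.

(* An element of the Stokes space S_w (an equivalence class [s]_F) is
   represented by its component map F |-> [s]^F on local frames at w
   (and 0 on other matrices).  The class relation (s,F) ~ (C(t) s, F')
   with F' = F rotated by t about w is the transformation law below. *)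
Definition stokes_elt := frame -> 'cV[R]_4.
Definition is_stokes (w : vec3) (x : stokes_elt) : Prop :=
  (forall F t, local_frame w F -> x (rotmx w t *m F) = Cmx t *m x F) /\
  (forall F, ~~ local_frame w F -> x F = 0).

Definition stokes_field (f : vec3 -> stokes_elt) : Prop :=
  forall w, on_sphere w -> is_stokes w (f w).

Definition mueller_field (K : vec3 -> vec3 -> stokes_elt -> stokes_elt) : Prop :=
  forall wi wo, on_sphere wi -> on_sphere wo ->
    (forall x, is_stokes wi x -> is_stokes wo (K wi wo x)) /\
    (forall (a : R) x y, is_stokes wi x -> is_stokes wi y ->
       K wi wo (fun F => a *: x F + y F) =
       (fun F => a *: K wi wo x F + K wi wo y F)).

Definition is_mueller_matrix (N : stokes_elt -> stokes_elt) (wi : vec3)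
  (Fi Fo : frame) (M : 'M[R]_4) : Prop :=
  forall x, is_stokes wi x -> N x Fo = M *m x Fi.

Definition rotform (f : vec3 -> stokes_elt) (Q : 'M[R]_3) : 'cV[R]_4 :=
  f (Q *m ez) (Q *m Fg).

Definition is_rotform_K (K : vec3 -> vec3 -> stokes_elt -> stokes_elt)
  (Kr : 'M[R]_3 -> 'M[R]_3 -> 'M[R]_4) : Prop :=
  forall Ri Ro, is_rot Ri -> is_rot Ro ->
    is_mueller_matrix (K (Ri *m ez) (Ro *m ez)) (Ri *m ez) (Ri *m Fg) (Ro *m Fg)
      (Kr Ri Ro).

Definition leb := (@lebesgue_measure R).

Definition sph (a b : R) : vec3 :=
  \col_(i < 3) match (i : nat) with
               | 0 => sin b * cos a | 1 => sin b * sin a | _ => cos b end.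

Definition S2int (h : vec3 -> R) : R :=
  Rintegral leb `[0, pi]
    (fun b => Rintegral leb `[0, 2 * pi] (fun a => h (sph a b) * sin b)).

Definition SO3int (h : 'M[R]_3 -> R) : R :=
  Rintegral leb `[0, 2 * pi] (fun c =>
  Rintegral leb `[0, pi] (fun b =>
  Rintegral leb `[0, 2 * pi] (fun a =>
    h (rotmx ez a *m rotmx ey b *m rotmx ez c) * sin b))).

Definition SO3intv (H : 'M[R]_3 -> 'cV[R]_4) : 'cV[R]_4 :=
  \col_(k < 4) SO3int (fun Q => H Q k 0).

(* the induced operator K_F[f]; the integral of the S_wo-valued function
   is taken componentwise in each local frame F at wo. *)
Definition KF (K : vec3 -> vec3 -> stokes_elt -> stokes_elt)
  (f : vec3 -> stokes_elt) (wo : vec3) : stokes_elt :=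
  fun F => if local_frame wo F then
             \col_(k < 4) S2int (fun wi => K wi wo (f wi) F k 0)
           else 0.

End Defs.

(* Main.v *)
Require Import Defs.
From HB Require Import structures.
From mathcomp Require Import all_boot all_order all_algebra.
From mathcomp Require Import all_classical all_reals all_analysis.
From mathcomp Require Import ring lra.
Import Order.TTheory GRing.Theory Num.Theory.
Import numFieldNormedType.Exports.
Local Open Scope ring_scope.

Lemma det2 (R : comNzRingType) (A : 'M[R]_2) : \det A = A 0 0 * A 1 1 - A 0 1 * A 1 0.
Proof.
rewrite (expand_det_row _ ord0) !big_ord_recr big_ord0 /= add0r /cofactor.
rewrite !det_mx11 !mxE /=.
pose g (i j : nat) := A (inord i) (inord j).
have H : forall i j, A i j = g i j by move=> i j; rewrite /g !inord_val.
rewrite !H /= /g /bump /=.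
rewrite expr0 expr1; ring.
Qed.

Lemma det3 (R : comNzRingType) (A : 'M[R]_3) : \det A =
  A 0 0 * (A 1 1 * A 2 2 - A 1 2 * A 2 1)
  - A 0 1 * (A 1 0 * A 2 2 - A 1 2 * A 2 0)
  + A 0 2 * (A 1 0 * A 2 1 - A 1 1 * A 2 0).
Proof.
rewrite (expand_det_row _ ord0) !big_ord_recr big_ord0 /= add0r /cofactor.
rewrite !det2 !mxE /=.
pose g (i j : nat) := A (inord i) (inord j).
have H : forall i j, A i j = g i j by move=> i j; rewrite /g !inord_val.
rewrite !H /= /g /bump /=.
rewrite expr0 expr1 expr2; ring.
Qed.
Section S.
Variable R : realType.

Definition mx3 (l : seq (seq R)) : 'M[R]_3 := \matrix_(i < 3, j < 3) nth 0 (nth [::] l i) j.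
Definition Zm (a : R) := mx3 [:: [:: cos a; - sin a; 0]; [:: sin a; cos a; 0]; [:: 0; 0; 1]].
Definition Ym (a : R) := mx3 [:: [:: cos a; 0; sin a]; [:: 0; 1; 0]; [:: - sin a; 0; cos a]].

Lemma rotz a : rotmx (ez R) a = Zm a.
Proof.
apply/matrixP => i j; rewrite /rotmx /Zm /mx3 /crossmx /coord !mxE.
rewrite big_ord_recr big_ord0 /= !mxE.
case: i => [[|[|[|//]]] Hi]; case: j => [[|[|[|//]]] Hj] /=; rewrite /Defs.coord ?mxE ?inordK //=; ring.
Qed.

Lemma roty a : rotmx (ey R) a = Ym a.
Proof.
apply/matrixP => i j; rewrite /rotmx /Ym /mx3 /crossmx !mxE.
rewrite big_ord_recr big_ord0 /= !mxE.
case: i => [[|[|[|//]]] Hi]; case: j => [[|[|[|//]]] Hj] /=; rewrite /Defs.coord ?mxE ?inordK //=; ring.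
Qed.

Lemma is_rotM (A B : 'M[R]_3) : is_rot A -> is_rot B -> is_rot (A *m B).
Proof.
move=> /andP[/eqP HA /eqP dA] /andP[/eqP HB /eqP dB]; apply/andP; split.
  by rewrite trmx_mul mulmxA -(mulmxA B^T) HA mulmx1 HB.
by rewrite det_mulmx dA dB mulr1.
Qed.

Ltac sumx := rewrite ?big_ord_recr ?big_ord0 /= ?mxE.

Lemma is_rotZ a : is_rot (Zm a).
Proof.
apply/andP; split; last first.
  by rewrite det3 /Zm /mx3 !mxE /=; apply/eqP; have := cos2sin2 a; nra.
apply/eqP; apply/matrixP => i j; rewrite !mxE; sumx.
case: i => [[|[|[|//]]] Hi]; case: j => [[|[|[|//]]] Hj] /=; sumx.
all: have := cos2sin2 a; nra.
Qed.

Lemma is_rotY a : is_rot (Ym a).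
Proof.
apply/andP; split; last first.
  by rewrite det3 /Ym /mx3 !mxE /=; apply/eqP; have := cos2sin2 a; nra.
apply/eqP; apply/matrixP => i j; rewrite !mxE; sumx.
case: i => [[|[|[|//]]] Hi]; case: j => [[|[|[|//]]] Hj] /=; sumx.
all: have := cos2sin2 a; nra.
Qed.

Definition Rabc a b c := rotmx (ez R) a *m rotmx (ey R) b *m rotmx (ez R) c.

Lemma Rabc_E a b c : Rabc a b c = Zm a *m Ym b *m Zm c.
Proof. by rewrite /Rabc; congr (_ *m _ *m _); [exact: rotz|exact: roty|exact: rotz]. Qed.

Lemma is_rot_Rabc a b c : is_rot (Rabc a b c).
Proof. rewrite Rabc_E; apply: is_rotM; first apply: is_rotM. all: [> exact: is_rotZ | exact: is_rotY | exact: is_rotZ]. Qed.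

Lemma Rabc_ez a b c : Rabc a b c *m ez R = sph a b.
Proof.
rewrite Rabc_E; apply/matrixP => i j; rewrite !mxE; sumx.
rewrite /Zm /Ym /mx3; sumx.
case: i => [[|[|[|//]]] Hi] /=; sumx; rewrite /widen_ord /ord_max /=; ring.
Qed.

Lemma sph_on a b : on_sphere (sph a b : vec3 R).
Proof.
rewrite /on_sphere; sumx; apply/eqP.
rewrite /widen_ord /ord_max /= !exprMn !cos2sin2; ring.
Qed.
End S.

Arguments Rabc {R}.
Arguments is_rot_Rabc {R}.
Arguments Rabc_ez {R}.
Arguments sph_on {R}.

Lemma leb2pi (R : realType) : fine ((@leb R) (`[0, 2*pi])%classic) = 2 * pi.
Proof.
have pos : (0%:E < (2*pi)%:E :> \bar R)%E.
  rewrite lte_fin; apply: mulr_gt0; [by [] | exact: pi_gt0].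
have H := @lebesgue_measure_itv R `[0, 2*pi]%R.
rewrite /= in H.
rewrite pos in H.
have H' : (@leb R) (`[0, 2*pi])%classic = ((2 * pi)%:E + (- 0)%:E)%E by exact: H.
by rewrite H' /= oppr0 addr0.
Qed.

Lemma pi2_neq0 (R : realType) : 2 * pi != 0 :> R.
Proof. apply: lt0r_neq0; apply: mulr_gt0; [by [] | exact: pi_gt0]. Qed.

Lemma cst2pi (R : realType) (r : R) :
  Rintegral (@leb R) (`[0, 2 * pi])%classic (fun _ => r) = r * (2 * pi).
Proof.
rewrite Rintegral_cst; last exact: measurable_itv.
by rewrite leb2pi.
Qed.

Lemma local_rot (R : realType) (Q : 'M[R]_3) : is_rot Q -> local_frame (Q *m ez R) Q.
Proof.
move=> HQ; apply/andP; split; first exact: HQ.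
apply/eqP/matrixP => i j; rewrite /axis3 !mxE; rewrite ?big_ord_recr ?big_ord0 /= ?mxE.
rewrite /widen_ord /ord_max /= !mulr0 mulr1 !add0r.
by congr (Q _ _); apply/val_inj; rewrite /= inordK.
Qed.

Theorem mainTheorem6 (R : realType) (f : vec3 R -> stokes_elt R)
  (K : vec3 R -> vec3 R -> stokes_elt R -> stokes_elt R)
  (Kr : 'M[R]_3 -> 'M[R]_3 -> 'M[R]_4) :
  stokes_field f -> mueller_field K -> is_rotform_K K Kr ->
  forall Ro : 'M[R]_3, is_rot Ro ->
    rotform (KF K f) Ro =
    (2 * pi)^-1 *: SO3intv (fun Ri => Kr Ri Ro *m rotform f Ri).
Proof.
move=> Hf _ HK Ro HRo.
rewrite /rotform /KF /Fg mulmx1 local_rot //.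
apply/matrixP => k j; rewrite !mxE /SO3int.
have Hpt : forall a b c, (Kr (Rabc a b c) Ro *m f (Rabc a b c *m ez R) (Rabc a b c *m 1%:M)) k 0
   = K (sph a b) (Ro *m ez R) (f (sph a b)) Ro k 0.
  move=> a b c.
  have := HK _ Ro (is_rot_Rabc a b c) HRo (f (Rabc a b c *m ez R)).
  rewrite /Fg mulmx1 => <-; first by rewrite Rabc_ez.
  by apply: Hf; rewrite Rabc_ez; exact: sph_on.
set h := (fun wi : vec3 R => K wi (Ro *m ez R) (f wi) Ro k 0).
have E : Rintegral (@leb R) (`[0, 2 * pi])%classic (fun c => S2int h) = Rintegral (@leb R) (`[0, 2 * pi])%classic (fun c => Rintegral (@leb R) (`[0, pi])%classic (fun b => Rintegral (@leb R) (`[0, 2 * pi])%classic (fun a => (Kr (Rabc a b c) Ro *m f (Rabc a b c *m ez R) (Rabc a b c *m 1%:M)) k 0 * sin b))).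
  apply: eq_Rintegral => c _; rewrite /S2int.
  apply: eq_Rintegral => b _; apply: eq_Rintegral => a _.
  by rewrite Hpt.
rewrite /Rabc in E; rewrite -E.
rewrite cst2pi.
by rewrite mulrCA (mulVf (pi2_neq0 R)) mulr1.
Qed.
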